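(* Let $(\Omega,\Sigma,\mu)$ be an admissible measure space and let $E\in\mathcal{J}_0(\mu)$. Then (1) $(E_0)''\subset^1E''$; (2) $E''\subset^1((E')_0)'$; (3) $(((E_0)')_0)'\subset^1((E')_0)'$; (4) $(E_0)''\subset^1(((E_0)')_0)'$.
   Context: $L_0(\mu)$: classes of measurable real functions ordered a.e. Admissible measure space: $\mu$ complete; a set whose intersection with every finite-measure measurable set is measurable is itself measurable; $\mu$ semifinite; $\mu$ has the direct sum property. A Banach ideal space (BIS) is a vector subspace $E\subset L_0(\mu)$ with complete norm such that $y\in E$, $|x|\le|y|$ a.e. imply $x\in E$, $\|x\|_E\le\|y\|_E$; maximal width: the only $z\in L_0(\mu)$ with $zy=0$ for all $y\in E$ is $z=0$. $E\subset^1F$: $E\subseteq F$ and $\|x\|_F\le\|x\|_E$ for $x\in E$. The dual $E'$ is the set of $f\in L_0(\mu)$ with $\|f\|_{E'}=\sup\{\int_\Omega fx\,d\mu:\|x\|_E=1\}<\infty$, with this norm. An element $x\in E$ has order continuous norm if whenever $(x_i)_{i\in I}$ is a net indexed by a directed set with $|x|\ge x_i$, $x_i$ decreasing and $\inf_i x_i=0$, then $\lim_i\|x_i\|_E=0$; $E_0$ is the set of such elements with the norm of $E$. A subset $F\subset E$ is a foundation in $E$ if it is an ideal in $E$ ($x\in F$, $y\in E$, $|y|\le|x|$ imply $y\in F$) and has maximal width. $\mathcal{J}_0(\mu)$ is the set of BIS $E$ (of maximal width) such that $E_0$ is a foundation in $E$ and $(E')_0$ is a foundation in $E'$. *)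

(* Defs.v *)
From HB Require Import structures.
From mathcomp Require Import all_boot all_order all_algebra.
From mathcomp Require Import all_classical all_reals all_analysis.
Set Implicit Arguments. Unset Strict Implicit. Unset Printing Implicit Defensive.
Import Order.TTheory GRing.Theory Num.Theory.
Import numFieldNormedType.Exports.
Local Open Scope classical_set_scope.
Local Open Scope ring_scope.

Section defs.
Context {d : measure_display} {T : measurableType d} {R : realType}.
Variable mu : {measure set T -> \bar R}.

Definition mu_complete : Prop :=
  forall A : set T, mu.-negligible A -> measurable A.

Definition mu_locally_determined : Prop :=
  forall A : set T,
    (forall B : set T, measurable B -> (mu B < +oo)%E -> measurable (A `&` B)) ->
    measurable A.

Definition mu_semifinite : Prop :=
  forall A : set T, measurable A -> mu A = +oo%E ->
    exists B : set T, [/\ measurable B, B `<=` A, (0 < mu B)%E & (mu B < +oo)%E].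

Definition mu_direct_sum : Prop :=
  exists (I : choiceType) (O : I -> set T),
    [/\ forall i, measurable (O i) /\ (mu (O i) < +oo)%E,
        forall i j, i <> j -> O i `&` O j = set0,
        \bigcup_i O i = setT,
        forall A : set T, (forall i, measurable (A `&` O i)) -> measurable A &
        forall A : set T, measurable A -> mu A = esum setT (fun i => mu (A `&` O i))].

Definition admissible : Prop :=
  [/\ mu_complete, mu_locally_determined, mu_semifinite & mu_direct_sum].

(* ---------- function spaces: elements of L_0(mu) are represented by
   measurable functions T -> R, all relations being taken a.e. ---------- *)
Record fspace := FSpace { fmem : (T -> R) -> Prop ; fnorm : (T -> R) -> R }.

Definition L0 (x : T -> R) : Prop := measurable_fun setT x.

Definition ae_le (x y : T -> R) : Prop := {ae mu, forall t, x t <= y t}.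
Definition ae_eq0 (x : T -> R) : Prop := {ae mu, forall t, x t = 0}.

Definition maximal_width (F : (T -> R) -> Prop) : Prop :=
  forall z, L0 z -> (forall y, F y -> ae_eq0 (fun t => z t * y t)) -> ae_eq0 z.

(* Banach ideal space (of maximal width, as in the paper's convention) *)
Definition is_BIS (E : fspace) : Prop :=
  [/\ (forall x, fmem E x -> L0 x),
      maximal_width (fmem E) &
    [/\
      [/\ fmem E (fun=> 0),
          (forall x y, fmem E x -> fmem E y -> fmem E (fun t => x t + y t)) &
          (forall (a : R) x, fmem E x -> fmem E (fun t => a * x t))],
      [/\ (forall x y, fmem E x -> fmem E y ->
             fnorm E (fun t => x t + y t) <= fnorm E x + fnorm E y),
          (forall (a : R) x, fmem E x -> fnorm E (fun t => a * x t) = `|a| * fnorm E x) &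
          (forall x, fmem E x -> fnorm E x = 0 -> ae_eq0 x)],
      (forall u : nat -> T -> R, (forall n, fmem E (u n)) ->
         (forall e : R, 0 < e -> exists N, forall n m, (N <= n)%N -> (N <= m)%N ->
            fnorm E (fun t => u n t - u m t) < e) ->
         exists v, fmem E v /\ forall e : R, 0 < e -> exists N, forall n, (N <= n)%N ->
            fnorm E (fun t => u n t - v t) < e) &
      (forall x y, fmem E y -> L0 x -> ae_le (fun t => `|x t|) (fun t => `|y t|) ->
         fmem E x /\ fnorm E x <= fnorm E y)]].

Definition sub1 (E F : fspace) : Prop :=
  forall x, fmem E x -> fmem F x /\ fnorm F x <= fnorm E x.

Definition dual_vals (E : fspace) (f : T -> R) : set R :=
  [set r | exists x, [/\ fmem E x, fnorm E x = 1 &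
                          r = Rintegral mu setT (fun t => f t * x t)]].

Definition dual (E : fspace) : fspace :=
  FSpace (fun f => [/\ L0 f,
                      (forall x, fmem E x -> mu.-integrable setT (fun t => (f t * x t)%:E)) &
                      has_ubound (dual_vals E f)])
         (fun f => sup (dual_vals E f)).

Definition oc_elem (E : fspace) (x : T -> R) : Prop :=
  forall (I : Type) (le : I -> I -> Prop) (xs : I -> T -> R),
    inhabited I ->
    (forall i, le i i) ->
    (forall i j k, le i j -> le j k -> le i k) ->
    (forall i j, exists k, le i k /\ le j k) ->
    (forall i, fmem E (xs i)) ->
    (forall i, ae_le (xs i) (fun t => `|x t|)) ->
    (forall i j, le i j -> ae_le (xs j) (xs i)) ->
    (* inf_i xs i = 0 in L_0(mu) *)
    (forall i, ae_le (fun=> 0) (xs i)) ->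
    (forall z, L0 z -> (forall i, ae_le z (xs i)) -> ae_le z (fun=> 0)) ->
    forall e : R, 0 < e -> exists i0, forall i, le i0 i -> fnorm E (xs i) < e.

Definition ocpart (E : fspace) : fspace :=
  FSpace (fun x => fmem E x /\ oc_elem E x) (fnorm E).

Definition foundation (F E : fspace) : Prop :=
  [/\ (forall x, fmem F x -> fmem E x),
      (forall x y, fmem F x -> fmem E y ->
          ae_le (fun t => `|y t|) (fun t => `|x t|) -> fmem F y) &
      maximal_width (fmem F)].

Definition in_J0 (E : fspace) : Prop :=
  [/\ is_BIS E, foundation (ocpart E) E & foundation (ocpart (dual E)) (dual E)].

End defs.

(* Main.v *)
Require Import Defs.
From HB Require Import structures.
From mathcomp Require Import all_boot all_order all_algebra.
From mathcomp Require Import all_classical all_reals all_analysis.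
From mathcomp Require Import lra.
From mathcomp Require Import measurable_realfun.
Set Implicit Arguments. Unset Strict Implicit. Unset Printing Implicit Defensive.
Import Order.TTheory GRing.Theory Num.Theory.
Import numFieldNormedType.Exports.
Local Open Scope classical_set_scope.
Local Open Scope ring_scope.


Section A.
Context {d : measure_display} {T : measurableType d} {R : realType}.
Variable mu : {measure set T -> \bar R}.
Implicit Types E G H : @fspace d T R.

Lemma sup_ge0_sym (S : set R) : (forall r, S r -> S (- r)) -> 0 <= sup S.
Proof.
move=> Hs.
have [[r Sr]|nS] := pselect (exists r, S r); last first.
  rewrite (_ : S = set0) ?sup0//; apply/seteqP; split=> // r Sr; apply: nS; by exists r.
have [hub|nub] := pselect (has_ubound S); last first.
  by rewrite sup_out // => -[].
have h1 := ub_le_sup hub Sr.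
have h2 := ub_le_sup hub (Hs _ Sr).
lra.
Qed.

Lemma sup_le_sym (S S' : set R) : S `<=` S' -> (forall r, S' r -> S' (- r)) ->
  has_ubound S' -> sup S <= sup S'.
Proof.
move=> SS' Hs hub.
have [[r Sr]|nS] := pselect (exists r, S r); last first.
  rewrite (_ : S = set0) ?sup0; last by apply/seteqP; split=> // r Sr; apply: nS; exists r.
  exact: sup_ge0_sym.
apply: ge_sup; first by exists r.
by move=> y Sy; apply: ub_le_sup => //; apply: SS'.
Qed.

Definition normsym E := forall x, fmem E x ->
  fmem E (fun t => -1 * x t) /\ fnorm E (fun t => -1 * x t) = fnorm E x.

Lemma dual_vals_sym E f : normsym E ->
  (forall x, fmem E x -> mu.-integrable setT (fun t => (f t * x t)%:E)) ->
  forall r, dual_vals mu E f r -> dual_vals mu E f (- r).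
Proof.
move=> hs hi r [x [Ex nx ->]].
have [E1 n1] := hs x Ex.
exists (fun t => -1 * x t); split => //; first by rewrite n1.
transitivity (Rintegral mu setT (fun t => -1 * (f t * x t))).
  by rewrite RintegralZl // ?mulN1r //; exact: hi.
by apply: eq_Rintegral => t _; rewrite mulrCA.
Qed.


Lemma normsym_BIS E : is_BIS mu E -> normsym E.
Proof.
case=> _ _ [[_ _ Hsc] [_ Hhom _] _ _] x Ex; split; first exact: Hsc.
by rewrite Hhom // normrN1 mul1r.
Qed.

Lemma oc_elem_abs E x y : (fun t => `|x t|) = (fun t => `|y t|) ->
  oc_elem mu E x -> oc_elem mu E y.
Proof.
move=> hxy ocx I le xs i0 r tr dir mem dom.
by apply: (ocx I le xs i0 r tr dir mem) => i; rewrite hxy; exact: dom.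
Qed.

Lemma normsym_oc E : normsym E -> normsym (ocpart mu E).
Proof.
move=> hs x [Ex ocx]; have [E1 n1] := hs x Ex; split => //=; split => //.
apply: oc_elem_abs ocx.
by apply/funext => t; rewrite mulN1r normrN.
Qed.

Lemma measurable_scale (a : R) (f : T -> R) : measurable_fun setT f ->
  measurable_fun setT (fun t => a * f t).
Proof. by move=> mf; apply: measurable_realfun.measurable_funM => //; exact: measurable_cst. Qed.

Lemma normsym_dual E : normsym E -> normsym (dual mu E).
Proof.
move=> hs g [Lg ig ubg].
have hN : forall x, fmem E x -> Rintegral mu setT (fun t => (-1 * g t) * x t) =
    - Rintegral mu setT (fun t => g t * x t).
  move=> x Ex.
  transitivity (Rintegral mu setT (fun t => -1 * (g t * x t))).
    by apply: eq_Rintegral => t _; rewrite mulrA.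
  by rewrite RintegralZl // ?mulN1r //; exact: ig.
have key : forall r, dual_vals mu E (fun t => -1 * g t) r <-> dual_vals mu E g (- r).
  move=> r; split.
    by move=> [x [Ex nx ->]]; exists x; split => //; rewrite hN // opprK.
  move=> [x [Ex nx hr]]; exists x; split => //.
  by rewrite hN // -hr opprK.
have eqs : dual_vals mu E (fun t => -1 * g t) = dual_vals mu E g.
  apply/seteqP; split => r.
    by move/key/(dual_vals_sym hs ig); rewrite opprK.
  by move=> h; apply/key; apply: (dual_vals_sym hs ig).
split; last by rewrite /= eqs.
split; first exact: measurable_scale.
  move=> x Ex.
  have -> : (fun t => ((-1 * g t) * x t)%:E) = (fun t => ((-1)%:E * (g t * x t)%:E)%E).
    by apply/funext => t; rewrite -EFinM mulrA.
  exact: (integrableZl measurableT _ (ig x Ex)).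
by rewrite eqs.
Qed.

Lemma sub1_dd_oc G : normsym G ->
  sub1 (dual mu (dual mu G)) (dual mu (ocpart mu (dual mu G))).
Proof.
move=> hs f [Lf If ubf].
have sub : dual_vals mu (ocpart mu (dual mu G)) f `<=` dual_vals mu (dual mu G) f.
  by move=> r [x [[Ex _] nx ->]]; exists x.
split.
  split => //; first by move=> x [Ex _]; exact: If.
  by case: ubf => M hM; exists M => r /sub; exact: hM.
apply: sup_le_sym => //.
exact: (dual_vals_sym (normsym_dual hs) If).
Qed.

Definition feqv G H : Prop := (forall x, fmem G x <-> fmem H x) /\ (forall x, fmem G x -> fnorm G x = fnorm H x).

Lemma eqv_fmem G H : feqv G H -> fmem G = fmem H.
Proof. by case=> h _; apply/funext => x; apply/propext. Qed.

Lemma dual_eqv G H : feqv G H -> dual mu G = dual mu H.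
Proof.
move=> e; have em := eqv_fmem e.
have ev : dual_vals mu G = dual_vals mu H.
  apply/funext => f; apply/seteqP; split => r [x [Ex nx ->]]; exists x.
    by rewrite -em -(e.2 x Ex).
  have Gx : fmem G x by rewrite em.
  by split => //; rewrite (e.2 x Gx).
by rewrite /dual em ev.
Qed.

Lemma oc_eqv G H : feqv G H -> feqv (ocpart mu G) (ocpart mu H).
Proof.
move=> e; have em := eqv_fmem e.
have eoc : forall x, oc_elem mu G x <-> oc_elem mu H x.
  move=> x; split => h I le xs i0 r tr dir mem dom dec pos inf eps e0.
    have mem' : forall i, fmem G (xs i) by move=> i; rewrite em.
    have [i1 hi1] := h I le xs i0 r tr dir mem' dom dec pos inf eps e0.
    by exists i1 => i li; rewrite -(e.2 _) ?em //; exact: hi1.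
  have mem' : forall i, fmem H (xs i) by move=> i; rewrite -em.
  have [i1 hi1] := h I le xs i0 r tr dir mem' dom dec pos inf eps e0.
  by exists i1 => i li; rewrite (e.2 _) ?em //; exact: hi1.
split => x /=.
  by rewrite em eoc.
by case=> Gx _; exact: e.2.
Qed.

Lemma sub1_refl G : sub1 G G.
Proof. by move=> x Gx; split. Qed.

End A.

Section B.
Context {d : measure_display} {T : measurableType d} {R : realType}.
Variable mu : {measure set T -> \bar R}.
Variable E : @fspace d T R.
Hypothesis hE : is_BIS mu E.
Hypothesis hF : foundation mu (ocpart mu E) E.
Local Notation F := (ocpart mu E).

Lemma L0E x : fmem E x -> L0 x. Proof. by case: hE => h _ _; exact: h. Qed.
Lemma addE x y : fmem E x -> fmem E y -> fmem E (fun t => x t + y t).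
Proof. case: hE => _ _ [[h0 hadd hsc] [htri hhom hnz] hcomp hid]; exact: hadd. Qed.
Lemma scE a x : fmem E x -> fmem E (fun t => a * x t).
Proof. case: hE => _ _ [[h0 hadd hsc] [htri hhom hnz] hcomp hid]; exact: hsc. Qed.
Lemma memE0 : fmem E (fun=> 0).
Proof. case: hE => _ _ [[h0 hadd hsc] [htri hhom hnz] hcomp hid]; exact: h0. Qed.
Lemma triE x y : fmem E x -> fmem E y ->
  fnorm E (fun t => x t + y t) <= fnorm E x + fnorm E y.
Proof. case: hE => _ _ [[h0 hadd hsc] [htri hhom hnz] hcomp hid]; exact: htri. Qed.
Lemma homE a x : fmem E x -> fnorm E (fun t => a * x t) = `|a| * fnorm E x.
Proof. case: hE => _ _ [[h0 hadd hsc] [htri hhom hnz] hcomp hid]; exact: hhom. Qed.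
Lemma nzE x : fmem E x -> fnorm E x = 0 -> Defs.ae_eq0 mu x.
Proof. case: hE => _ _ [[h0 hadd hsc] [htri hhom hnz] hcomp hid]; exact: hnz. Qed.
Lemma idE x y : fmem E y -> L0 x -> ae_le mu (fun t => `|x t|) (fun t => `|y t|) ->
  fmem E x /\ fnorm E x <= fnorm E y.
Proof. case: hE => _ _ [[h0 hadd hsc] [htri hhom hnz] hcomp hid]; exact: hid. Qed.
Lemma idE1 x y : fmem E y -> L0 x -> ae_le mu (fun t => `|x t|) (fun t => `|y t|) ->
  fmem E x.
Proof. by move=> Ey Lx h; case: (idE Ey Lx h). Qed.
Lemma idE2 x y : fmem E y -> L0 x -> ae_le mu (fun t => `|x t|) (fun t => `|y t|) ->
  fnorm E x <= fnorm E y.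
Proof. by move=> Ey Lx h; case: (idE Ey Lx h). Qed.
Lemma idF x y : fmem F x -> fmem E y ->
  ae_le mu (fun t => `|y t|) (fun t => `|x t|) -> fmem F y.
Proof. case: hF => _ h _; exact: h. Qed.
Lemma mwF : maximal_width mu (fmem F).
Proof. by case: hF => _ _ h. Qed.

Lemma norm0E : fnorm E (fun=> 0) = 0.
Proof.
have h := homE 0 memE0.
transitivity (`|0:R| * fnorm E (fun=> 0)); last by rewrite normr0 mul0r.
by rewrite -h; congr fnorm; apply/funext => t /=; rewrite mul0r.
Qed.

Lemma norm_ge0 x : fmem E x -> 0 <= fnorm E x.
Proof.
move=> Ex.
have h := triE Ex (scE (-1) Ex).
rewrite homE // normrN1 mul1r in h.
have e0 : (fun t => x t + -1 * x t) = (fun=> 0).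
  by apply/funext => t; rewrite mulN1r subrr.
rewrite e0 norm0E in h; lra.
Qed.

Lemma ae0_norm x : fmem E x -> Defs.ae_eq0 mu x -> fnorm E x = 0.
Proof.
move=> Ex h0; apply/eqP; rewrite eq_le norm_ge0 // andbT.
have := (idE memE0 (L0E Ex) _).2; rewrite norm0E; apply.
by apply: filterS h0 => t /= ->; rewrite normr0.
Qed.

Lemma L0_abs (x : T -> R) : L0 x -> L0 (fun t => `|x t|).
Proof. by move=> mx; apply: measurableT_comp => //; exact: normr_measurable. Qed.

Lemma F_ideal x y : fmem F x -> L0 y ->
  ae_le mu (fun t => `|y t|) (fun t => `|x t|) -> fmem F y.
Proof.
move=> Fx Ly h; apply: (idF Fx) => //.
exact: (idE Fx.1 Ly h).1.
Qed.

Lemma F_abs x : fmem F x -> fmem F (fun t => `|x t|).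
Proof.
move=> Fx; apply: (F_ideal Fx); first exact/L0_abs/L0E/Fx.1.
by apply: aeW => t /=; rewrite normr_id.
Qed.


Lemma oc_add x1 x2 : fmem F x1 -> fmem F x2 -> fmem F (fun t => x1 t + x2 t).
Proof.
move=> [E1 oc1] [E2 oc2]; split; first exact: addE.
move=> I le xs i0 rf tr dir mem dom dec pos inf e e0.
pose us i := fun t => Num.min (xs i t) `|x1 t|.
pose vs i := fun t => Num.max (xs i t - `|x1 t|) 0.
have mx i : L0 (xs i) := L0E (mem i).
have m1 : L0 (fun t => `|x1 t|) := L0_abs (L0E E1).
have Lus i : L0 (us i) := measurable_realfun.measurable_minr (mx i) m1.
have Lvs i : L0 (vs i) := measurable_realfun.measurable_maxr
   (measurable_realfun.measurable_funB (mx i) m1) (measurable_cst (0:R)).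
have usE i : fmem E (us i).
  apply: (idE1 (mem i) (Lus i)); apply: filterS (pos i) => t /= h.
  rewrite /us; case: (leP (xs i t) `|x1 t|) => h1 //.
  by rewrite normr_id (ger0_norm h); exact: ltW.
have vsE i : fmem E (vs i).
  apply: (idE1 (mem i) (Lvs i)); apply: filterS (pos i) => t /= h.
  have hb := normr_ge0 (x1 t).
  rewrite /vs; case: (leP (xs i t - `|x1 t|) 0) => h1.
    by rewrite normr0.
  by rewrite (ger0_norm h) (gtr0_norm h1); lra.
have decomp i : xs i = (fun t => us i t + vs i t).
  apply/funext => t; rewrite /us /vs.
  case: (leP (xs i t) `|x1 t|) => h1; case: (leP (xs i t - `|x1 t|) 0) => h2; lra.
have e2 : 0 < e / 2 by lra.
have [j1 hj1] : exists j1, forall i, le j1 i -> fnorm E (us i) < e / 2.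
  apply: (oc1 I le us i0 rf tr dir usE) => //.
  - move=> i; apply: aeW => t /=; rewrite /us.
    by case: (leP (xs i t) `|x1 t|) => h1 //; rewrite normr_id; exact: ltW.
  - move=> i j lij; apply: filterS (dec i j lij) => t /= h; rewrite /us.
    by case: (leP (xs i t) `|x1 t|) => h1; case: (leP (xs j t) `|x1 t|) => h2; lra.
  - move=> i; apply: filterS (pos i) => t /= h; rewrite /us.
    by have := normr_ge0 (x1 t); case: (leP (xs i t) `|x1 t|) => h1 h2; lra.
  - move=> z Lz hz; apply: inf => // i; apply: filterS (hz i) => t /= h.
    by move: h; rewrite /us; case: (leP (xs i t) `|x1 t|) => h1 h2; lra.
have [j2 hj2] : exists j2, forall i, le j2 i -> fnorm E (vs i) < e / 2.
  apply: (oc2 I le vs i0 rf tr dir vsE) => //.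
  - move=> i; apply: filterS (dom i) => t /= h; rewrite /vs.
    have := ler_normD (x1 t) (x2 t); have := normr_ge0 (x2 t).
    by case: (leP (xs i t - `|x1 t|) 0) => h1 h2 h3; lra.
  - move=> i j lij; apply: filterS (dec i j lij) => t /= h; rewrite /vs.
    by case: (leP (xs i t - `|x1 t|) 0) => h1; case: (leP (xs j t - `|x1 t|) 0) => h2; lra.
  - by move=> i; apply: aeW => t /=; rewrite /vs; case: (leP (xs i t - `|x1 t|) 0) => h1; lra.
  - move=> z Lz hz; apply: inf => // i; apply: filterS2 (hz i) (pos i) => t /= h h'.
    have := normr_ge0 (x1 t).
    by move: h; rewrite /vs; case: (leP (xs i t - `|x1 t|) 0) => h1 h2 h3; lra.
have [k [l1 l2]] := dir j1 j2.
exists k => i lki.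
have := hj1 i (tr _ _ _ l1 lki); have := hj2 i (tr _ _ _ l2 lki).
rewrite (decomp i) => h1 h2.
have := triE (usE i) (vsE i); lra.
Qed.

Lemma F0 : fmem F (fun=> 0).
Proof.
split; first exact: memE0.
move=> I le xs [i] rf tr dir mem dom dec pos inf e e0; exists i => j _.
apply: le_lt_trans e0; rewrite -norm0E; apply: (idE2 memE0 (L0E (mem j))).
apply: filterS2 (dom j) (pos j) => t /= h1 h2.
by rewrite normr0 in h1 *; rewrite ger0_norm //.
Qed.

Lemma F_nat n x : fmem F x -> fmem F (fun t => n%:R * x t).
Proof.
move=> Fx; elim: n => [|n ih].
  have -> : (fun t => 0%:R * x t) = (fun=> 0) by apply/funext => t; rewrite mul0r.
  exact: F0.
have -> : (fun t => n.+1%:R * x t) = (fun t => n%:R * x t + x t).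
  by apply/funext => t; rewrite -addn1 natrD mulrDl mul1r.
exact: oc_add.
Qed.

Lemma F_scale a x : fmem F x -> fmem F (fun t => a * x t).
Proof.
move=> Fx; have hb := archi_boundP (normr_ge0 a).
apply: (F_ideal (F_nat (Num.bound `|a|) Fx)).
  exact/measurable_scale/L0E/Fx.1.
apply: aeW => t /=; rewrite !normrM (@ger0_norm _ (_%:R)) //.
by apply: ler_wpM2r => //; exact: ltW.
Qed.

Lemma F_sum (y : nat -> T -> R) n : (forall k, fmem F (y k)) ->
  fmem F (fun t => \sum_(k < n) `|y k t|).
Proof.
move=> Fy; elim: n => [|n ih].
  have -> : (fun t => \sum_(k < 0) `|y k t|) = (fun=> 0).
    by apply/funext => t; rewrite big_ord0.
  exact: F0.
have -> : (fun t => \sum_(k < n.+1) `|y k t|) =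
    (fun t => \sum_(k < n) `|y k t| + `|y n t|).
  by apply/funext => t; rewrite big_ord_recr.
by apply: oc_add => //; exact: F_abs.
Qed.

Lemma ereal_contra (s a b : \bar R) (e : R) : s \is a fin_num -> a \is a fin_num ->
  b \is a fin_num -> (s - e%:E < a)%E -> e < fine b -> ((a + b)%R <= s)%E -> False.
Proof.
case: s => // s _; case: a => // a _; case: b => // b _ /=.
rewrite lte_fin => h1 h2; rewrite lee_fin; lra.
Qed.

Lemma msupp (y : T -> R) : L0 y -> measurable (y @^-1` [set~ 0%R]).
Proof.
move=> Ly; rewrite -[_ @^-1` _]setTI; apply: (Ly measurableT).
apply: measurableC; exact: measurable_set1.
Qed.

Lemma exhaust B : measurable B -> (mu B < +oo)%E ->
  exists y : nat -> T -> R, (forall n, fmem F (y n)) /\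
    mu (B `\` \bigcup_n (y n @^-1` [set~ 0%R])) = 0%E.
Proof.
move=> mB Bfin.
pose S := [set mu (B `&` (y @^-1` [set~ 0%R])) | y in fmem F].
have mI y : fmem F y -> measurable (B `&` (y @^-1` [set~ 0%R])).
  by move=> Fy; apply: measurableI => //; apply: msupp; exact: L0E Fy.1.
have S0 : S 0%E.
  exists (fun=> 0); first exact: F0.
  rewrite (_ : _ @^-1` _ = set0) ?setI0 ?measure0 //.
  by apply/seteqP; split => t //=.
have subS : forall y, fmem F y ->
    (mu (B `&` (y @^-1` [set~ 0%R])) <= ereal_sup S)%E.
  by move=> y Fy; apply: ereal_sup_ubound; exists y.
have sle : (ereal_sup S <= mu B)%E.
  apply: ge_ereal_sup => _ [y Fy <-]; apply: measureIl => //.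
  by apply: msupp; exact: L0E Fy.1.
have s0 : (0 <= ereal_sup S)%E := ereal_sup_ubound S0.
have sfin : ereal_sup S \is a fin_num.
  by rewrite ge0_fin_numE //; apply: le_lt_trans sle Bfin.
have hy : forall n : nat, exists y, fmem F y /\
    (ereal_sup S - (n.+1%:R^-1)%:E < mu (B `&` (y @^-1` [set~ 0%R])))%E.
  move=> n; have np : (0 < n.+1%:R^-1 :> R) by rewrite invr_gt0.
  by have [_ [y Fy <-] h] := ub_ereal_sup_adherent np sfin; exists y.
have [y hyP] := choice hy.
exists y; split; first by move=> n; case: (hyP n).
set U := \bigcup_n (y n @^-1` [set~ 0%R]).
have mU : measurable U.
  by apply: bigcup_measurable => n _; apply: msupp; exact: L0E (hyP n).1.1.
have key : forall w, fmem F w ->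
    mu ((B `\` U) `&` (w @^-1` [set~ 0%R])) = 0%E.
  move=> w Fw.
  set D := (B `\` U) `&` _.
  have mD : measurable D.
    by apply: measurableI; [exact: measurableD|apply: msupp; exact: L0E Fw.1].
  apply/eqP; rewrite eq_le measure_ge0 andbT leNgt; apply/negP => Dpos.
  have Dfin : (mu D < +oo)%E.
    apply: le_lt_trans Bfin; apply: le_measure; rewrite ?inE //.
    by move=> t [[]].
  have Dfn : mu D \is a fin_num by rewrite ge0_fin_numE.
  have dpos : 0 < fine (mu D) by rewrite -lte_fin fineK.
  have [n hn] := ltr_add_invr dpos; rewrite add0r in hn.
  have Fy' : fmem F (fun t => `|y n t| + `|w t|).
    by apply: oc_add; apply: F_abs; [exact: (hyP n).1|exact: Fw].
  have := subS _ Fy'.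
  have sp : (B `&` (y n @^-1` [set~ 0%R])) `|` D `<=`
      B `&` ((fun t => `|y n t| + `|w t|) @^-1` [set~ 0%R]).
    move=> t [[Bt ynt]|[[Bt Ut] wt]]; split => //=.
      move=> /eqP; rewrite paddr_eq0 // normr_eq0 => /andP[/eqP h _]; exact: ynt h.
    move=> /eqP; rewrite paddr_eq0 // => /andP[_]; rewrite normr_eq0 => /eqP; exact: wt.
  have disj : (B `&` (y n @^-1` [set~ 0%R])) `&` D = set0.
    apply/seteqP; split => // t [[_ ynt] [[_ Ut] _]]; apply: Ut; exists n => //.
  have mU2 := measureU mu (mI _ (hyP n).1) mD disj.
  have mono : (mu ((B `&` (y n @^-1` [set~ 0%R])) `|` D) <=
      mu (B `&` ((fun t => `|y n t| + `|w t|)%R @^-1` [set~ 0%R])))%E.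
    apply: le_measure; rewrite ?inE //; first exact: measurableU (mI _ (hyP n).1) mD.
    exact: mI.
  move=> hle; have := le_trans mono hle; rewrite mU2.
  have h1 := (hyP n).2.
  have ynfin : mu (B `&` (y n @^-1` [set~ 0%R])) \is a fin_num.
    rewrite ge0_fin_numE //; apply: le_lt_trans (subS _ (hyP n).1) _.
    by rewrite -ge0_fin_numE.
  exact: (ereal_contra sfin ynfin Dfn h1 hn).
set z : T -> R := \1_(B `\` U).
have Lz : L0 z := measurable_indic (measurableD mB mU).
have hz : Defs.ae_eq0 mu z.
  apply: mwF => // w Fw.
  exists ((B `\` U) `&` (w @^-1` [set~ 0%R])); split.
  - by apply: measurableI; [exact: measurableD|apply: msupp; exact: L0E Fw.1].
  - exact: key.
  - move=> t /= h; rewrite /z indicE in h.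
    case: (boolP (t \in B `\` U)) h => [/set_mem htB|htB] h.
      by split => // /eqP wt; apply: h; rewrite (eqP wt) mulr0.
    by exfalso; apply: h; rewrite mul0r.
case: hz => N [mN N0 sN].
apply/eqP; rewrite eq_le measure_ge0 andbT -N0.
apply: le_measure; rewrite ?inE //; first exact: measurableD.
move=> t htB; apply: sN => /=; rewrite /z indicE mem_set //.
by move/eqP; rewrite oner_eq0.
Qed.

Variable g : T -> R.
Hypothesis hg : fmem (dual mu F) g.
Local Notation C := (fnorm (dual mu F) g).

Lemma Lg : L0 g. Proof. by case: hg. Qed.
Lemma ig x : fmem F x -> mu.-integrable setT (fun t => (g t * x t)%:E).
Proof. by case: hg => _ h _; exact: h. Qed.
Lemma ubg : has_ubound (dual_vals mu F g). Proof. by case: hg. Qed.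

Lemma C_ge0 : 0 <= C.
Proof.
change (0 <= sup (dual_vals mu F g)).
apply: sup_ge0_sym; apply: dual_vals_sym; last exact: ig.
apply: normsym_oc; exact: normsym_BIS hE.
Qed.

Lemma mgx x : L0 x -> measurable_fun setT (EFin \o (fun t => g t * x t)).
Proof.
move=> Lx; apply/measurable_EFinP.
exact: (measurable_realfun.measurable_funM Lg Lx).
Qed.

Lemma boundD w : fmem F w -> Rintegral mu setT (fun t => g t * w t) <= C * fnorm E w.
Proof.
move=> Fw; have n0 := norm_ge0 Fw.1.
have [nz|np] := eqVneq (fnorm E w) 0.
  have h0 := nzE Fw.1 nz.
  rewrite nz mulr0 /Rintegral.
  rewrite (ae_eq_integral (cst 0%E)) //=.
  - by rewrite integral0.
  - exact/mgx/L0E/Fw.1.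
  - by apply: filterS h0 => t /= -> _; rewrite mulr0.
have pn : 0 < fnorm E w by rewrite lt_neqAle eq_sym np n0.
pose v := fun t => (fnorm E w)^-1 * w t.
have Fv : fmem F v by apply: F_scale.
have nv : fnorm E v = 1.
  rewrite /v homE; last exact: Fw.1.
  by rewrite ger0_norm ?invr_ge0 // mulVf.
have dv : dual_vals mu F g (Rintegral mu setT (fun t => g t * v t)).
  by exists v; split.
have := ub_le_sup ubg dv; change (sup (dual_vals mu F g)) with C.
have -> : Rintegral mu setT (fun t => g t * v t) =
    (fnorm E w)^-1 * Rintegral mu setT (fun t => g t * w t).
  transitivity (Rintegral mu setT (fun t => (fnorm E w)^-1 * (g t * w t))).
    by apply: eq_Rintegral => t _; rewrite /v mulrCA.
  by rewrite RintegralZl //; exact: ig.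
by rewrite ler_pdivrMl // mulrC.
Qed.

Lemma boundAbs w : fmem F w ->
  (\int[mu]_(t in setT) (`|g t * w t|)%:E <= (C * fnorm E w)%:E)%E.
Proof.
move=> Fw.
pose w' := fun t => if 0 <= g t then `|w t| else - `|w t|.
have Lw : L0 w := L0E Fw.1.
have Lw' : L0 w'.
  apply: measurable_fun_ifT.
  - exact: (measurable_realfun.measurable_fun_ler (measurable_cst (0:R)) Lg).
  - exact: L0_abs.
  - exact: (measurable_realfun.measurable_funN (L0_abs Lw)).
have aw : ae_le mu (fun t => `|w' t|) (fun t => `|w t|).
  by apply: aeW => t /=; rewrite /w'; case: ifP => _; rewrite ?normrN normr_id.
have Fw' : fmem F w' := F_ideal Fw Lw' aw.
have nw' : fnorm E w' <= fnorm E w := idE2 Fw.1 Lw' aw.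
have -> : (fun t => (`|g t * w t|)%:E) = (fun t => (g t * w' t)%:E).
  apply/funext => t; rewrite /w' normrM; case: ifPn => h.
    by rewrite (ger0_norm h).
  by rewrite ltr0_norm ?ltNge // mulrN mulNr.
rewrite -(fineK (integrable_fin_num measurableT (ig Fw'))) lee_fin.
apply: le_trans (boundD Fw') _.
by apply: ler_wpM2l => //; exact: C_ge0.
Qed.

Lemma boundB x B : fmem E x -> measurable B -> (mu B < +oo)%E ->
  (\int[mu]_(t in B) (`|g t| * `|x t|)%:E <= (C * fnorm E x)%:E)%E.
Proof.
move=> Ex mB Bfin.
have [y [Fy null]] := exhaust mB Bfin.
set U := \bigcup_n (y n @^-1` [set~ 0%R]).
have mU : measurable U.
  by apply: bigcup_measurable => n _; apply: msupp; exact: L0E (Fy n).1.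
pose Y n := fun t => \sum_(k < n) `|y k t|.
have FY n : fmem F (Y n) := F_sum n Fy.
have Y0 n t : 0 <= Y n t by apply: sumr_ge0 => k _.
have YS n t : Y n.+1 t = Y n t + `|y n t| by rewrite /Y big_ord_recr.
have Ynd t : {homo (fun n => Y n t) : n m / (n <= m)%N >-> n <= m}.
  apply/nondecreasing_seqP => n; rewrite YS; have := normr_ge0 (y n t); lra.
pose V n := fun t => n%:R * Y n t.
have FV n : fmem F (V n) := F_nat n (FY n).
have V0 n t : 0 <= V n t by apply: mulr_ge0 => //; exact: Y0.
have Vnd t : {homo (fun n => V n t) : n m / (n <= m)%N >-> n <= m}.
  apply/nondecreasing_seqP => n; rewrite /V YS -addn1 natrD.
  have := normr_ge0 (y n t); have := Y0 n t; have : (0 <= n%:R :> R) by [].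
  nra.
pose ax := fun t => \1_B t * `|x t|.
have ax0 t : 0 <= ax t by apply: mulr_ge0 => //; rewrite indicE.
have axle t : ax t <= `|x t|.
  rewrite /ax indicE; case: (t \in B) => /=; rewrite ?mul1r ?mul0r //.
pose w n := fun t => Num.min (ax t) (V n t).
have w0 n t : 0 <= w n t.
  by rewrite /w; case: (leP (ax t) (V n t)) => _; [exact: ax0|exact: V0].
have Lax : L0 ax.
  apply: measurable_funM; first exact: measurable_indic.
  exact/L0_abs/L0E.
have Lw n : L0 (w n) := measurable_minr Lax (L0E (FV n).1).
have Fw n : fmem F (w n).
  apply: (F_ideal (FV n) (Lw n)); apply: aeW => t /=.
  rewrite (ger0_norm (w0 n t)) (ger0_norm (V0 n t)) /w.
  by case: (leP (ax t) (V n t)) => h //; exact: ltW.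
have nw n : fnorm E (w n) <= fnorm E x.
  apply: (idE2 Ex (Lw n)); apply: aeW => t /=.
  rewrite (ger0_norm (w0 n t)) /w.
  case: (leP (ax t) (V n t)) => h; first exact: axle.
  by apply: le_trans (axle t); exact: ltW.
have bnd n : (\int[mu]_(t in setT) (`|g t| * w n t)%:E <= (C * fnorm E x)%:E)%E.
  rewrite (eq_integral (fun t => (`|g t * w n t|)%:E)); last first.
    by move=> t _; rewrite normrM (ger0_norm (w0 n t)).
  apply: le_trans (boundAbs (Fw n)) _; rewrite lee_fin.
  by apply: ler_wpM2l; [exact: C_ge0|exact: nw].
pose D := B `&` U.
have mD : measurable D by exact: measurableI.
pose f n := fun t => (`|g t| * w n t)%:E.
have mfT n : measurable_fun setT (f n).
  apply/measurable_EFinP; apply: measurable_funM; [exact/L0_abs/Lg|exact: Lw].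
have mf n : measurable_fun D (f n) by apply: measurable_funTS.
have f0 n t : D t -> (0 <= f n t)%E.
  by move=> _; rewrite lee_fin; apply: mulr_ge0 => //; exact: w0.
have wnd t : {homo (fun n => w n t) : n m / (n <= m)%N >-> n <= m}.
  move=> n m nm; have := Vnd t n m nm; rewrite /w /=.
  by case: (leP (ax t) (V n t)) => h1; case: (leP (ax t) (V m t)) => h2; lra.
have nd t : D t -> {homo f^~ t : n m / (n <= m)%N >-> (n <= m)%E}.
  move=> _ n m nm; rewrite lee_fin; apply: ler_wpM2l => //; exact: wnd.
have MC := monotone_convergence mu mD mf f0 nd.
have cv t : D t -> f^~ t @ \oo --> limn (f^~ t).
  by move=> Dt; exact: ereal_nondecreasing_is_cvgn (nd t Dt).
have mlim : measurable_fun D (fun t => limn (f^~ t)).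
  exact: emeasurable_fun_cvg mf cv.
have mh : measurable_fun setT (fun t => (`|g t| * `|x t|)%:E).
  apply/measurable_EFinP; apply: measurable_funM; [exact/L0_abs/Lg|exact/L0_abs/L0E].
have mBU : measurable (B `\` U) by exact: measurableD.
rewrite (@ge0_negligible_integral _ _ _ mu B (B `\` U) _ mBU mB (measurable_funTS mh)) //.
rewrite setDD.
apply: (@le_trans _ _ (\int[mu]_(t in D) limn (f^~ t))%E).
  have f10 : forall t, D t -> (0 <= (`|g t| * `|x t|)%:E)%E.
    by move=> t _; rewrite lee_fin; apply: mulr_ge0.
  apply: (@ge0_le_integral _ _ _ mu D mD _ _ f10 (measurable_funTS mh) mlim).
  move=> t Dt; case: (Dt) => Bt [m _ ymt].
  have apos : 0 < `|y m t| by rewrite normr_gt0; apply/eqP.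
  pose N := maxn m.+1 (Num.bound (`|x t| / `|y m t|)).
  have hN : (f N t <= limn (f^~ t))%E.
    apply: lime_ge; first exact: ereal_nondecreasing_is_cvgn (nd t Dt).
    by exists N => // n /= hn; apply: nd.
  apply: le_trans hN; rewrite lee_fin; apply: ler_wpM2l => //.
  have axt : ax t = `|x t| by rewrite /ax indicE mem_set // mul1r.
  have hY : `|y m t| <= Y N t.
    apply: le_trans (Ynd t m.+1 N (leq_maxl _ _)); rewrite YS; have := Y0 m t; lra.
  have hb := archi_boundP (divr_ge0 (normr_ge0 (x t)) (normr_ge0 (y m t))).
  have hNb : (Num.bound (`|x t| / `|y m t|))%:R <= N%:R :> R.
    by rewrite ler_nat leq_maxr.
  have hxV : `|x t| <= V N t.
    have : `|x t| / `|y m t| * `|y m t| <= N%:R * Y N t.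
      apply: (ler_pM (divr_ge0 (normr_ge0 _) (normr_ge0 _)) (normr_ge0 _) _ hY).
      exact: le_trans (ltW hb) hNb.
    by rewrite divfK // gt_eqF.
  by rewrite /w axt; case: (leP `|x t| (V N t)) => h //; lra.
rewrite MC; apply: lime_le.
  apply: ereal_nondecreasing_is_cvgn => n m nm.
  apply: (@ge0_le_integral _ _ _ mu D mD _ _ (f0 n) (mf n) (mf m)).
  by move=> t Dt; exact: nd t Dt n m nm.
apply: nearW => n; apply: le_trans (bnd n).
apply: ge0_subset_integral => //; first by move=> t _; rewrite lee_fin; apply: mulr_ge0 => //; exact: w0.
Qed.

End B.

Section S.
Context {d : measure_display} {T : measurableType d} {R : realType}.
Variable mu : {measure set T -> \bar R}.
Hypothesis hsf : mu_semifinite mu.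

Lemma semi_large L : measurable L -> mu L = +oo%E -> forall M : R,
  exists A, [/\ measurable A, A `<=` L, (mu A < +oo)%E & (M%:E < mu A)%E].
Proof.
move=> mL Loo M.
pose S := [set mu A | A in [set A | [/\ measurable A, A `<=` L & (mu A < +oo)%E]]].
have [lt|ge] := ltP (M%:E) (ereal_sup S).
  have [_ [A [mA AL Af] <-] h] := ereal_sup_gt lt.
  by exists A.
exfalso.
have S0 : S 0%E by exists set0; [split => //; rewrite measure0|rewrite measure0].
have s0 : (0 <= ereal_sup S)%E := ereal_sup_ubound S0.
have sfin : ereal_sup S \is a fin_num.
  by rewrite ge0_fin_numE //; apply: le_lt_trans ge _; exact: ltry.
have hA : forall n : nat, exists A, [/\ measurable A, A `<=` L, (mu A < +oo)%E &
    (ereal_sup S - (n.+1%:R^-1)%:E < mu A)%E].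
  move=> n; have np : (0 < n.+1%:R^-1 :> R) by rewrite invr_gt0.
  by have [_ [A [mA AL Af] <-] h] := ub_ereal_sup_adherent np sfin; exists A.
have [A hAP] := choice hA.
pose C := fix C n := if n is k.+1 then C k `|` A k.+1 else A 0.
have hC : forall n, [/\ measurable (C n), C n `<=` L & (mu (C n) < +oo)%E].
  elim => [|n [mC CL Cf]] /=; first by case: (hAP 0).
  case: (hAP n.+1) => mA AL Af _; split.
  - exact: measurableU.
  - by move=> t [/CL|/AL].
  - by apply: le_lt_trans (measureU2 mu mC mA) _; exact: lte_add_pinfty.
have mC n : measurable (C n) by case: (hC n).
have CL n : C n `<=` L by case: (hC n).
have Cf n : (mu (C n) < +oo)%E by case: (hC n).
have AC : forall n, A n `<=` C n by case => [|n] //= t At; right.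
have Cnd : {homo C : n m / (n <= m)%N >-> (n <= m)%O}.
  by apply/nondecreasing_seqP => n; rewrite subsetEset => t Ct /=; left.
have Cle : forall n, (mu (C n) <= ereal_sup S)%E.
  by move=> n; apply: ereal_sup_ubound; exists (C n) => //; split.
set Ci := \bigcup_n C n.
have mCi : measurable Ci by apply: bigcup_measurable => n _.
have Cile : (mu Ci <= ereal_sup S)%E.
  have cv := nondecreasing_cvg_mu (mu:=mu) mC mCi Cnd.
  have /cvg_lim <- // := cv.
  apply: lime_le; first by apply/cvg_ex; eexists; exact: cv.
  exact: nearW.
have Dinf : mu (L `\` Ci) = +oo%E.
  have h0 := @measureDI _ _ _ mu L Ci mL mCi.
  have h : (+oo = mu (L `\` Ci) + mu (L `&` Ci))%E by rewrite -Loo; exact: h0.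
  apply/eqP; rewrite eq_le leey /= leNgt; apply/negP => hlt.
  have : (mu (L `\` Ci) + mu (L `&` Ci) < +oo)%E.
    apply: lte_add_pinfty => //; apply: le_lt_trans (measureIr _ mL mCi) _.
    by apply: le_lt_trans Cile _; rewrite -ge0_fin_numE.
  by rewrite -h ltxx.
have [A' [mA' A'sub A'pos A'fin]] := hsf (measurableD mL mCi) Dinf.
have A'fn : mu A' \is a fin_num by rewrite ge0_fin_numE.
have dpos : 0 < fine (mu A') by rewrite -lte_fin fineK.
have [n hn] := ltr_add_invr dpos; rewrite add0r in hn.
have disj : C n `&` A' = set0.
  apply/seteqP; split => // t [Ct /A'sub [_ nCi]]; by apply: nCi; exists n.
have mU := measureU mu (mC n) mA' disj.
have inS : (mu (C n `|` A') <= ereal_sup S)%E.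
  apply: ereal_sup_ubound; exists (C n `|` A') => //; split.
  - exact: measurableU.
  - by move=> t [/CL|/A'sub []].
  - by apply: le_lt_trans (measureU2 mu (mC n) mA') _; exact: lte_add_pinfty (Cf n) A'fin.
rewrite mU in inS.
have Cnfin : mu (C n) \is a fin_num by rewrite ge0_fin_numE.
have h : (ereal_sup S - (n.+1%:R^-1)%:E < mu (C n))%E.
  case: (hAP n) => mAn _ _ h; apply: lt_le_trans h _.
  by apply: le_measure; rewrite ?inE.
exact: (ereal_contra sfin Cnfin A'fn h hn inS).
Qed.

End S.

Section C.
Context {d : measure_display} {T : measurableType d} {R : realType}.
Variable mu : {measure set T -> \bar R}.
Variable E : @fspace d T R.
Hypothesis hE : is_BIS mu E.
Hypothesis hF : foundation mu (ocpart mu E) E.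
Hypothesis hsf : mu_semifinite mu.
Local Notation F := (ocpart mu E).

Lemma boundT g x : fmem (dual mu F) g -> fmem E x ->
  (\int[mu]_(t in setT) (`|g t| * `|x t|)%:E <=
     ((fnorm (dual mu F) g) * fnorm E x)%:E)%E.
Proof.
move=> hg Ex.
set K := fnorm (dual mu F) g * fnorm E x.
have K0 : 0 <= K.
  apply: mulr_ge0; [exact (C_ge0 hE hg)|exact (norm_ge0 hE Ex)].
pose hr := fun t => `|g t| * `|x t|.
have hr0 t : 0 <= hr t by apply: mulr_ge0.
have mhr : L0 hr.
  by apply: measurable_funM; [exact: L0_abs (Lg hg)|exact: L0_abs (L0E hE Ex)].
have mhrE : measurable_fun setT (fun t => (hr t)%:E) by apply/measurable_EFinP.
pose Bn (n : nat) := hr @^-1` `[n.+1%:R^-1, +oo[.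
have mBn n : measurable (Bn n).
  by rewrite -[Bn n]setTI; apply: (mhr measurableT); exact: measurable_itv.
have inBn n t : Bn n t <-> n.+1%:R^-1 <= hr t.
  by rewrite /Bn /= in_itv /= andbT.
case: (pselect (forall n, (mu (Bn n) < +oo)%E)) => [fin|nfin].
  pose f n := (fun t => (hr t)%:E) \_ (Bn n).
  have mf n : measurable_fun setT (f n).
    by apply/(measurable_restrictT _ (mBn n)); exact: measurable_funTS.
  have f0 n t : setT t -> (0 <= f n t)%E.
    by move=> _; rewrite /f patchE; case: ifP => // _; rewrite lee_fin.
  have nd t : setT t -> {homo f^~ t : n m / (n <= m)%N >-> (n <= m)%E}.
    move=> _ n m nm; rewrite /f !patchE.
    case: (boolP (t \in Bn n)) => hn; case: (boolP (t \in Bn m)) => hm //.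
    - exfalso; move: hm; rewrite notin_setE => /(_ _); apply.
      move/set_mem: hn => /inBn hn; apply/inBn; apply: le_trans hn.
      by rewrite lef_pV2 ?posrE ?ltr0n // ler_nat.
    - by rewrite lee_fin.
  have MC := monotone_convergence mu measurableT mf f0 nd.
  have cv t : setT t -> f^~ t @ \oo --> limn (f^~ t).
    by move=> Tt; exact: ereal_nondecreasing_is_cvgn (nd t Tt).
  have mlim : measurable_fun setT (fun t => limn (f^~ t)).
    exact: emeasurable_fun_cvg mf cv.
  apply: (@le_trans _ _ (\int[mu]_(t in setT) limn (f^~ t))%E).
    have f10 : forall t, setT t -> (0 <= (hr t)%:E)%E by move=> t _; rewrite lee_fin.
    apply: (@ge0_le_integral _ _ _ mu setT measurableT _ _ f10 mhrE mlim).
    move=> t Tt.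
    have [hz|hp] := eqVneq (hr t) 0.
      rewrite hz; apply: lime_ge; first exact: cv.
      by apply: nearW => n; exact: f0.
    have hp' : 0 < hr t by rewrite lt_neqAle eq_sym hp hr0.
    have [k hk] := ltr_add_invr hp'; rewrite add0r in hk.
    have -> : (hr t)%:E = f k t.
      by rewrite /f patchE mem_set //; apply/inBn; exact: ltW.
    apply: lime_ge; first exact: cv.
    by exists k => // n /= kn; exact: nd.
  rewrite MC; apply: lime_le.
    apply: ereal_nondecreasing_is_cvgn => n m nm.
    apply: (@ge0_le_integral _ _ _ mu setT measurableT _ _ (f0 n) (mf n) (mf m)).
    by move=> t Tt; exact: nd t Tt n m nm.
  apply: nearW => n; rewrite /f -integral_mkcond.
  exact: (boundB hE hF hg Ex (mBn n) (fin n)).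
have [n hn] : exists n, ~ (mu (Bn n) < +oo)%E by apply/existsNP.
have inf : mu (Bn n) = +oo%E.
  by move/negP: hn; rewrite -leNgt leye_eq => /eqP.
have [A [mA AB Afin Abig]] := semi_large hsf (mBn n) inf (n.+1%:R * (K + 1)).
have h1 := boundB hE hF hg Ex mA Afin.
have h2 : (((n.+1%:R : R)^-1)%:E * mu A <= \int[mu]_(t in A) (`|g t| * `|x t|)%:E)%E.
  rewrite -integral_cst //.
  have c0 : forall t, A t -> (0 <= cst ((n.+1%:R : R)^-1)%:E t)%E.
    by move=> t _; rewrite lee_fin invr_ge0.
  apply: (@ge0_le_integral _ _ _ mu A mA _ _ c0 (measurable_cst _) (measurable_funTS mhrE)).
  by move=> t /AB /inBn h; rewrite lee_fin.
have h3 := le_trans h2 h1.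
have Afn : mu A \is a fin_num by rewrite ge0_fin_numE.
exfalso; move: Abig h3; rewrite -(fineK Afn) -EFinM !lte_fin lee_fin.
set a := fine (mu A); set m := n.+1%:R.
have m0 : (0 < m :> R) by rewrite ltr0n.
have e : a = m * (m^-1 * a) by rewrite mulrA mulfV ?mul1r // gt_eqF.
rewrite [in X in _ < X]e; set y := m^-1 * a => h4 h5.
have h6 : m * y <= m * K by rewrite ler_pM2l.
have := lt_le_trans h4 h6; rewrite ltr_pM2l //.
clear -K0; move=> h7; lra.
Qed.

Lemma core g : fmem (dual mu F) g ->
  fmem (dual mu E) g /\ fnorm (dual mu E) g = fnorm (dual mu F) g.
Proof.
move=> hg.
set C := fnorm (dual mu F) g.
have C0 : 0 <= C by exact (C_ge0 hE hg).
have Lg' := Lg hg.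
have intE : forall x, fmem E x -> mu.-integrable setT (fun t => (g t * x t)%:E).
  move=> x Ex; apply/integrableP; split.
    exact: (mgx hg (L0E hE Ex)).
  rewrite (eq_integral (fun t => (`|g t| * `|x t|)%:E)); last first.
    by move=> t _ /=; rewrite normrM.
  by apply: le_lt_trans (boundT hg Ex) _; exact: ltry.
have ub : forall r, dual_vals mu E g r -> r <= C.
  move=> r [x [Ex nx ->]].
  have ix := intE x Ex.
  apply: le_trans (ler_norm _) _.
  apply: le_trans (le_normr_Rintegral measurableT ix) _.
  have fin := integrable_fin_num measurableT (integrable_norm ix).
  rewrite /Rintegral -lee_fin fineK //.
  rewrite (eq_integral (fun t => (`|g t| * `|x t|)%:E)); last first.
    by move=> t _ /=; rewrite normrM.
  by apply: le_trans (boundT hg Ex) _; rewrite nx mulr1.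
have hub : has_ubound (dual_vals mu E g) by exists C => r /ub.
split; first by split.
apply/le_anti/andP; split.
  change (sup (dual_vals mu E g) <= C).
  have [[r hr]|ne] := pselect (exists r, dual_vals mu E g r).
    by apply: ge_sup; [exists r|move=> y /ub].
  rewrite (_ : dual_vals mu E g = set0) ?sup0 //.
  by apply/seteqP; split => // r hr; apply: ne; exists r.
change (sup (dual_vals mu F g) <= sup (dual_vals mu E g)).
apply: sup_le_sym => //.
  by move=> r [x [[Ex _] nx ->]]; exists x.
apply: dual_vals_sym => //; exact: normsym_BIS hE.
Qed.

Lemma dualF_eqv : feqv (dual mu F) (dual mu E).
Proof.
split => g; last by move=> hg; rewrite (core hg).2.
split; first by move=> hg; exact: (core hg).1.
move=> [Lg0 ig0 [M hM]]; split => //; first by move=> x [Ex _]; exact: ig0.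
by exists M => r [x [[Ex _] nx ->]]; apply: hM; exists x.
Qed.

End C.

Theorem theorem7_dev (d : measure_display) (T : measurableType d) (R : realType)
  (mu : {measure set T -> \bar R}) (E : @fspace d T R) :
  admissible mu -> in_J0 mu E ->
  [/\ sub1 (dual mu (dual mu (ocpart mu E))) (dual mu (dual mu E)),
      sub1 (dual mu (dual mu E)) (dual mu (ocpart mu (dual mu E))),
      sub1 (dual mu (ocpart mu (dual mu (ocpart mu E)))) (dual mu (ocpart mu (dual mu E))) &
      sub1 (dual mu (dual mu (ocpart mu E))) (dual mu (ocpart mu (dual mu (ocpart mu E))))].
Proof.
case=> _ _ hsf _ [hE hF _].
have e := dualF_eqv hE hF hsf.
split.
- by rewrite (dual_eqv mu e); exact: sub1_refl.
- by apply: sub1_dd_oc; exact: normsym_BIS hE.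
- by rewrite (dual_eqv mu (oc_eqv mu e)); exact: sub1_refl.
- by apply: sub1_dd_oc; apply: normsym_oc; exact: normsym_BIS hE.
Qed.


Unset Implicit Arguments.

Theorem theorem7 (d : measure_display) (T : measurableType d) (R : realType)
  (mu : {measure set T -> \bar R}) (E : @fspace d T R) :
  admissible mu -> in_J0 mu E ->
  [/\ sub1 (dual mu (dual mu (ocpart mu E))) (dual mu (dual mu E)),
      sub1 (dual mu (dual mu E)) (dual mu (ocpart mu (dual mu E))),
      sub1 (dual mu (ocpart mu (dual mu (ocpart mu E)))) (dual mu (ocpart mu (dual mu E))) &
      sub1 (dual mu (dual mu (ocpart mu E))) (dual mu (ocpart mu (dual mu (ocpart mu E))))].
Proof.
exact: theorem7_dev.
Qed.
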